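(* Let $p\in\mathbb{R}$ and $K:=\{z=(v,m,\sigma,e)\in Z: v\otimes v-\sigma=e\,\mathrm{Id},\ m=(e+p)v\}$. For any $z_1,z_2\in K$ with $z_1\ne z_2$ one has $z_2-z_1\in\Lambda$.
   Context: $\mathcal S_0^{2\times2}$ is the space of traceless symmetric $2\times2$ matrices, $Z:=\mathbb{R}^2\times\mathbb{R}^2\times\mathcal S_0^{2\times2}\times\mathbb{R}$. The wave cone is $\Lambda=\{\bar z=(\bar v,\bar m,\bar\sigma,\bar e)\in Z:\ (\bar v,\bar e)\neq0\text{ and there is }0\ne(\xi,c)\in\mathbb{R}^2\times\mathbb{R}\text{ with }(\bar\sigma+\bar e\,\mathrm{Id})\xi+c\bar v=0,\ \bar v\cdot\xi=0,\ \bar m\cdot\xi+c\bar e=0\}$. *)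

(* Defs.v *)
From HB Require Import structures.
From mathcomp Require Import all_boot all_order all_algebra.
From mathcomp Require Import reals.
Set Implicit Arguments. Unset Strict Implicit. Unset Printing Implicit Defensive.
Import Order.TTheory GRing.Theory Num.Theory.
Local Open Scope ring_scope.

(* Points of Z = R^2 x R^2 x S_0^{2x2} x R, vectors as column vectors. *)
Record zpt (R : realType) := Zpt {
  zv : 'cV[R]_2; zm : 'cV[R]_2; zs : 'M[R]_2; ze : R }.

Definition symtraceless (R : realType) (s : 'M[R]_2) : Prop :=
  s^T = s /\ \tr s = 0.

Definition inZ (R : realType) (z : zpt R) : Prop := symtraceless (zs z).

Definition dotv (R : realType) (u w : 'cV[R]_2) : R := (u^T *m w) 0 0.

Definition zsub (R : realType) (z1 z2 : zpt R) : zpt R :=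
  Zpt (zv z1 - zv z2) (zm z1 - zm z2) (zs z1 - zs z2) (ze z1 - ze z2).

Definition inK (R : realType) (p : R) (z : zpt R) : Prop :=
  inZ z /\ zv z *m (zv z)^T - zs z = (ze z)%:M /\ zm z = (ze z + p) *: zv z.

Definition inLambda (R : realType) (z : zpt R) : Prop :=
  inZ z /\ (zv z != 0 \/ ze z != 0) /\
  exists (xi : 'cV[R]_2) (c : R), (xi != 0 \/ c != 0) /\
    (zs z + (ze z)%:M) *m xi + c *: zv z = 0 /\
    dotv (zv z) xi = 0 /\
    dotv (zm z) xi + c * ze z = 0.

(* Main.v *)
Require Import Defs.
From mathcomp Require Import all_boot all_order all_algebra.
From mathcomp Require Import reals ring lra.
Import Order.TTheory GRing.Theory Num.Theory.
Local Open Scope ring_scope.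

Lemma Kent (R : realType) p (z : zpt R) : inK p z ->
  [/\ zs z 0 0 = zv z 0 0 ^+ 2 - ze z, zs z 1 1 = zv z 1 0 ^+2 - ze z,
      zs z 0 1 = zv z 0 0 * zv z 1 0, zs z 1 0 = zv z 0 0 * zv z 1 0 &
      ze z = (zv z 0 0 ^+ 2 + zv z 1 0 ^+ 2) / 2] /\
  (zm z 0 0 = (ze z + p) * zv z 0 0 /\ zm z 1 0 = (ze z + p) * zv z 1 0).
Proof.
case=> [[Hsym Htr] [H Hm]].
have E (i j : 'I_2) := congr1 (fun M : 'M[R]_2 => M i j) H.
have E00 := E 0 0; have E11 := E 1 1; have E01 := E 0 1; have E10 := E 1 0.
move: E00 E11 E01 E10; rewrite !mxE !big_ord1 !mxE /= => E00 E11 E01 E10.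
move: Htr; rewrite /mxtrace !big_ord_recl big_ord0 /= => Htr.
have M (i : 'I_2) := congr1 (fun M : 'cV[R]_2 => M i 0) Hm.
have M0 := M 0; have M1 := M 1; move: M0 M1; rewrite !mxE => M0 M1.
split; last by [].
have e0: lift ord0 ord0 = 1 :> 'I_2 by apply/val_inj.
rewrite e0 in Htr.
split.
all: move: E00 E11 E01 E10 Htr; rewrite ?mulr1n ?mulr0n /= => E00 E11 E01 E10 Htr.
all: rewrite ?expr2; try lra.
Qed.

Lemma I2 (i : 'I_2) : i = 0 \/ i = 1.
Proof. case: i => [[|[|i]] Hi]; [left|right|]; try exact/val_inj; by []. Qed.

Lemma mx2P (R : realType) (A B : 'M[R]_2) : A 0 0 = B 0 0 -> A 0 1 = B 0 1 ->
  A 1 0 = B 1 0 -> A 1 1 = B 1 1 -> A = B.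
Proof. move=> h0 h1 h2 h3; apply/matrixP => i j; by case: (I2 i) => ->; case: (I2 j) => ->. Qed.

Lemma cv2P (R : realType) (A B : 'cV[R]_2) : A 0 0 = B 0 0 -> A 1 0 = B 1 0 -> A = B.
Proof. move=> h0 h1; apply/matrixP => i j; rewrite (ord1 j); by case: (I2 i) => ->. Qed.

Lemma l0 : lift ord0 ord0 = 1 :> 'I_2. Proof. exact/val_inj. Qed.

Theorem lemma2p3 (R : realType) (p : R) (z1 z2 : zpt R) :
  inK p z1 -> inK p z2 -> z1 <> z2 -> inLambda (zsub z2 z1).
Proof.
move=> K1 K2 neq.
have [[a00 a11 a01 a10 ae] [am0 am1]] := @Kent R p z1 K1.
have [[b00 b11 b01 b10 be] [bm0 bm1]] := @Kent R p z2 K2.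
have [[S1 T1] _] := K1. have [[S2 T2] _] := K2.
have Hvb : zv z2 - zv z1 != 0.
  apply/negP => /eqP /subr0_eq Hv.
  have Hv0 : zv z2 0 0 = zv z1 0 0 by rewrite Hv.
  have Hv1 : zv z2 1 0 = zv z1 1 0 by rewrite Hv.
  have He : ze z2 = ze z1 by rewrite be ae Hv.
  have Hs : zs z2 = zs z1 by apply: mx2P; rewrite ?a00 ?a01 ?a10 ?a11 ?b00 ?b01 ?b10 ?b11 ?He ?Hv.
  have Hm : zm z2 = zm z1 by apply: cv2P; rewrite ?am0 ?am1 ?bm0 ?bm1 ?He ?Hv.
  apply: neq; move: Hv He Hs Hm.
  by case: z1 {K1 Hv0 Hv1 a00 a11 a01 a10 ae am0 am1 S1 T1} => v1 m1 s1 e1; case: z2 {K2 b00 b11 b01 b10 be bm0 bm1 S2 T2} => v2 m2 s2 e2 /= -> -> -> ->.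
rewrite /inLambda /inZ /symtraceless /=.
split.
  split; first by rewrite linearB /= S1 S2.
  by rewrite linearB /= T1 T2 subrr.
split; first by left.
pose vb := zv z2 - zv z1.
exists (\col_i (if i == 0 then - vb 1 0 else vb 0 0)).
exists (-(zv z1 0 0 * - vb 1 0 + zv z1 1 0 * vb 0 0)).
split.
  left; apply/negP => /eqP H0; move/negP: Hvb; apply; apply/eqP.
  apply: cv2P.
    by have := congr1 (fun M : 'cV[R]_2 => M 1 0) H0; rewrite !mxE /= => ->.
  by have := congr1 (fun M : 'cV[R]_2 => M 0 0) H0; rewrite !mxE /= => /eqP; rewrite oppr_eq0 => /eqP ->.
rewrite /dotv /vb.
split.
  apply: cv2P; rewrite !mxE !big_ord_recl big_ord0 !mxE l0 /=
    ?a00 ?a01 ?a10 ?a11 ?b00 ?b01 ?b10 ?b11; ring.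
split; rewrite !mxE !big_ord_recl big_ord0 !mxE l0 /= ?am0 ?am1 ?bm0 ?bm1; ring.
Qed.
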